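(* If \(M\) is a nuclear bornological \(V\)-module, then so is its completion \(\overline{M}\).
   Context: Let \(V\) be a complete discrete valuation ring with uniformiser \(\pi\). A bornology on a set is a collection of subsets (called bounded) containing all finite subsets and closed under finite unions and under taking subsets. A bornological \(V\)-module is a \(V\)-module with a bornology such that every bounded subset is contained in a bounded \(V\)-submodule; bounded maps are \(V\)-linear maps sending bounded sets to bounded sets. It is complete if every bounded subset is contained in a bounded, \(\pi\)-adically complete \(V\)-submodule. Every bornological \(V\)-module \(M\) has a completion \(\overline{M}\): a complete bornological \(V\)-module with a bounded map \(M\to\overline M\) through which every bounded map from \(M\) to a complete bornological \(V\)-module factors uniquely. A subset \(S\) of a bornological \(V\)-module \(M\) is compactoid if there is a bounded \(V\)-submodule \(T\subseteq M\) with \(S\subseteq T\) such that for every \(n\in\mathbb N\) there is a finite set \(F_n\subseteq T\) with \(S\subseteq VF_n+\pi^nT\). \(M\) is nuclear if every bounded subset of \(M\) is compactoid. *)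

(* Defs.v *)
From mathcomp Require Import all_boot all_algebra.
Set Implicit Arguments. Unset Strict Implicit. Unset Printing Implicit Defensive.
Import GRing.Theory.
Local Open Scope ring_scope.

Definition subsetP {M : Type} (A B : M -> Prop) := forall x, A x -> B x.

Section BornDefs.
Variables (V : idomainType) (pi : V).

Definition is_submod (M : lmodType V) (T : M -> Prop) :=
  [/\ T 0, (forall x y, T x -> T y -> T (x + y)) &
      (forall (a : V) x, T x -> T (a *: x))].

Definition in_piT (M : lmodType V) (T : M -> Prop) (n : nat) (x : M) :=
  exists t, T t /\ x = pi ^+ n *: t.

(* T is pi-adically complete (Hausdorff and complete): T -> lim T/pi^n T
   is bijective, expressed via pi-adically Cauchy sequences. *)
Definition pi_adically_complete (M : lmodType V) (T : M -> Prop) :=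
  (forall x, T x -> (forall n, in_piT T n x) -> x = 0) /\
  (forall u : nat -> M, (forall k, T (u k)) ->
     (forall k, in_piT T k (u k.+1 - u k)) ->
     exists2 x, T x & forall k, in_piT T k (x - u k)).

Definition is_complete_dvr :=
  [/\ pi != 0, pi \notin GRing.unit,
      (forall x : V, x != 0 -> exists u n, u \in GRing.unit /\ x = u * pi ^+ n) &
      pi_adically_complete (fun _ : V^o => True)].

Definition is_bornology (M : eqType) (B : (M -> Prop) -> Prop) :=
  [/\ (forall (S : M -> Prop) (s : seq M), subsetP S (fun x => x \in s) -> B S),
      (forall S1 S2, B S1 -> B S2 -> B (fun x => S1 x \/ S2 x)) &
      (forall S1 S2, subsetP S1 S2 -> B S2 -> B S1)].

Definition is_born_mod (M : lmodType V) (B : (M -> Prop) -> Prop) :=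
  is_bornology B /\
  forall S, B S -> exists T, [/\ is_submod T, B T & subsetP S T].

Definition is_complete_born (M : lmodType V) (B : (M -> Prop) -> Prop) :=
  is_born_mod B /\
  forall S, B S -> exists T,
    [/\ is_submod T, B T, pi_adically_complete T & subsetP S T].

Definition is_linear (M N : lmodType V) (f : M -> N) :=
  forall (a : V) x y, f (a *: x + y) = a *: f x + f y.

Definition is_bounded_map (M N : lmodType V) (BM : (M -> Prop) -> Prop)
  (BN : (N -> Prop) -> Prop) (f : M -> N) :=
  is_linear f /\ forall S, BM S -> BN (fun y => exists2 x, S x & y = f x).

Definition is_completion (M : lmodType V) (BM : (M -> Prop) -> Prop)
  (N : lmodType V) (BN : (N -> Prop) -> Prop) (i : M -> N) :=
  [/\ is_complete_born BN, is_bounded_map BM BN i &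
   forall (P : lmodType V) (BP : (P -> Prop) -> Prop) (g : M -> P),
     is_complete_born BP -> is_bounded_map BM BP g ->
     exists h : N -> P, [/\ is_bounded_map BN BP h, (forall x, h (i x) = g x) &
        forall h' : N -> P, is_bounded_map BN BP h' ->
          (forall x, h' (i x) = g x) -> forall y, h' y = h y]].

Definition compactoid (M : lmodType V) (B : (M -> Prop) -> Prop) (S : M -> Prop) :=
  exists T, [/\ is_submod T, B T, subsetP S T &
    forall n : nat, exists F : seq M, (forall f, f \in F -> T f) /\
      forall x, S x -> exists (c : nat -> V) (t : M),
        T t /\ x = \sum_(k < size F) c k *: F`_k + pi ^+ n *: t].

Definition nuclear (M : lmodType V) (B : (M -> Prop) -> Prop) :=
  is_born_mod B /\ forall S, B S -> compactoid B S.

End BornDefs.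

(* Main.v *)
From Pilot Require Import Defs.
From mathcomp Require Import all_boot all_algebra.
From Stdlib Require Import ClassicalEpsilon.
Set Implicit Arguments. Unset Strict Implicit. Unset Printing Implicit Defensive.
Import GRing.Theory.
Local Open Scope ring_scope.
Notation psub := Pilot.Defs.subsetP.

Section Aux.
Variables (V : idomainType) (pi : V) (N : lmodType V).

Definition lc (F : seq N) (c : nat -> V) : N := \sum_(k < size F) c k *: F`_k.
Definition inspan (F : seq N) (x : N) := exists c, x = lc F c.

Lemma lc_cons y F c : lc (y :: F) c = c 0%N *: y + lc F (fun k => c k.+1).
Proof. by rewrite /lc /= big_ord_recl /=; congr (_ + _); apply: eq_bigr => k _; rewrite lift0. Qed.

Lemma lc0 F c : (forall k, c k = 0) -> lc F c = 0.
Proof. by move=> h; rewrite /lc big1 // => k _; rewrite h scale0r. Qed.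

Lemma inspan0 F : inspan F 0.
Proof. by exists (fun _ => 0); rewrite lc0. Qed.

Lemma inspanD F x y : inspan F x -> inspan F y -> inspan F (x + y).
Proof.
move=> [c ->] [d ->]; exists (fun k => c k + d k); rewrite /lc -big_split /=.
by apply: eq_bigr => k _; rewrite scalerDl.
Qed.

Lemma inspanZ F a x : inspan F x -> inspan F (a *: x).
Proof.
move=> [c ->]; exists (fun k => a * c k); rewrite /lc scaler_sumr.
by apply: eq_bigr => k _; rewrite scalerA.
Qed.

Lemma inspan_cons y F x : inspan F x -> inspan (y :: F) x.
Proof.
move=> [c ->]; exists (fun k => if k is j.+1 then c j else 0).
by rewrite lc_cons scale0r add0r.
Qed.

Lemma inspan_head y F : inspan (y :: F) y.
Proof.
exists (fun k => if k is 0%N then 1 else 0); rewrite lc_cons scale1r.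
by rewrite (@lc0 F) ?addr0.
Qed.

Lemma inspan_mem F x : x \in F -> inspan F x.
Proof.
elim: F => [//|y F IH]; rewrite in_cons => /orP [/eqP -> | /IH]; first exact: inspan_head.
exact: inspan_cons.
Qed.

Lemma inspan_catl F G x : inspan F x -> inspan (F ++ G) x.
Proof.
elim: F x => [|y F IH] x [c ->]; first by rewrite /lc big_ord0; exact: inspan0.
rewrite lc_cons; apply: inspanD; first by apply: inspanZ; exact: inspan_head.
by apply: inspan_cons; apply: IH; eexists.
Qed.

Lemma inspan_catr F G x : inspan G x -> inspan (F ++ G) x.
Proof. by elim: F => [//|y F IH] /IH; exact: inspan_cons. Qed.

Definition approx (T : N -> Prop) n F x :=
  exists y t, [/\ inspan F y, T t & x = y + pi ^+ n *: t].

Lemma approx_mono (T T' : N -> Prop) n F x :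
  psub T T' -> approx T n F x -> approx T' n F x.
Proof. by move=> s [y [t [h1 h2 ->]]]; exists y, t; split => //; apply: s. Qed.

Section Sub.
Variable T : N -> Prop.
Hypothesis HT : is_submod T.

Lemma sub0 : T 0. Proof. by case: HT. Qed.
Lemma subD x y : T x -> T y -> T (x + y). Proof. by case: HT => _ h _; apply: h. Qed.
Lemma subZ a x : T x -> T (a *: x). Proof. by case: HT => _ _ h; apply: h. Qed.
Lemma subN x : T x -> T (- x). Proof. by move=> h; rewrite -scaleN1r; apply: subZ. Qed.
Lemma subB x y : T x -> T y -> T (x - y). Proof. by move=> h1 h2; apply: subD => //; apply: subN. Qed.

Lemma approx0 n F : approx T n F 0.
Proof. by exists 0, 0; split; [exact: inspan0 | exact: sub0 | rewrite scaler0 addr0]. Qed.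

Lemma approxD n F x y : approx T n F x -> approx T n F y -> approx T n F (x + y).
Proof.
move=> [a [t [h1 h2 ->]]] [b [u [h3 h4 ->]]]; exists (a + b), (t + u); split.
- exact: inspanD.
- exact: subD.
- by rewrite scalerDr addrACA.
Qed.

Lemma approxZ n F c x : approx T n F x -> approx T n F (c *: x).
Proof.
move=> [a [t [h1 h2 ->]]]; exists (c *: a), (c *: t); split.
- exact: inspanZ.
- exact: subZ.
- by rewrite scalerDr !scalerA mulrC.
Qed.
End Sub.

Lemma in_piT_mono (T T' : N -> Prop) n x :
  psub T T' -> in_piT pi T n x -> in_piT pi T' n x.
Proof. by move=> s [t [h ->]]; exists t; split => //; apply: s. Qed.

End Aux.

Section Main.
Variables (V : idomainType) (pi : V) (N : lmodType V) (BN : (N -> Prop) -> Prop).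

Lemma cmpP (T : N -> Prop) n F x :
  (exists (c : nat -> V) (t : N), T t /\ x = \sum_(k < size F) c k *: F`_k + pi ^+ n *: t)
  <-> approx pi T n F x.
Proof.
split.
- by move=> [c [t [h ->]]]; exists (lc F c), t; split => //; exists c.
- by move=> [y [t [[c ->] h ->]]]; exists c, t.
Qed.

Lemma compactoid_sub (S S' : N -> Prop) :
  compactoid pi BN S -> psub S' S -> compactoid pi BN S'.
Proof.
move=> [T [HT BT ST HF]] sub; exists T; split => //.
- by move=> x /sub /ST.
- move=> n; have [F [FT HFx]] := HF n; exists F; split => // x /sub; exact: HFx.
Qed.

Lemma compactoid_fin (HB : is_born_mod BN) (s : seq N) :
  compactoid pi BN (fun x => x \in s).
Proof.
case: HB => [[Hfin Hun Hsub] Hmod].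
have BS : BN (fun x => x \in s) by apply: (Hfin _ s).
have [T [HT BT ST]] := Hmod _ BS.
exists T; split => // n; exists s; split; first by move=> f /ST.
move=> x xs; apply/cmpP; exists x, 0; split; [exact: inspan_mem | exact: sub0 | ].
by rewrite scaler0 addr0.
Qed.

Lemma compactoid_union (HB : is_born_mod BN) (S1 S2 : N -> Prop) :
  compactoid pi BN S1 -> compactoid pi BN S2 ->
  compactoid pi BN (fun x => S1 x \/ S2 x).
Proof.
case: HB => [[Hfin Hun Hsub] Hmod].
move=> [T1 [HT1 BT1 ST1 HF1]] [T2 [HT2 BT2 ST2 HF2]].
have [T [HT BT ST]] := Hmod _ (Hun _ _ BT1 BT2).
exists T; split => //.
- by move=> x [/ST1 h | /ST2 h]; apply: ST; [left | right].
move=> n; have [F1 [FT1 H1]] := HF1 n; have [F2 [FT2 H2]] := HF2 n.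
exists (F1 ++ F2); split.
- by move=> f; rewrite mem_cat => /orP [/FT1 h | /FT2 h]; apply: ST; [left|right].
move=> x [/H1 | /H2] /cmpP [y [t [hy ht ->]]]; apply/cmpP; exists y, t; split => //.
- exact: inspan_catl.
- by apply: ST; left.
- exact: inspan_catr.
- by apply: ST; right.
Qed.

Lemma grp (M : zmodType) (a b c d : M) : a - (b - c) = a - (d - c) - (b - d).
Proof. by rewrite !opprB -[RHS]addrA [X in _ = a + X]addrA subrK. Qed.

Definition BP (S : N -> Prop) := BN S /\ compactoid pi BN S.

Lemma complete_hull (HC : is_complete_born pi BN) (S : N -> Prop) :
  BP S -> exists T, [/\ is_submod T, BP T, pi_adically_complete pi T & psub S T].
Proof.
case: HC => [[[Hfin Hun Hsub] Hmod] Hcomp].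
move=> [BS [T0 [HT0 BT0 ST0 HF0]]].
have [T1 [HT1 BT1 [Hhaus Hcau] ST01]] := Hcomp _ BT0.
pose valid n F := (forall f, f \in F -> T1 f) /\ forall s, S s -> approx pi T1 n F s.
pose T x := T1 x /\ forall n F, valid n F -> approx pi T1 n F x.
have TT1 : psub T T1 by move=> x [].
have HT : is_submod T.
  split.
  - by split; [exact: sub0 | move=> n F _; exact: approx0].
  - move=> x y [h1 h2] [h3 h4]; split; first exact: subD.
    by move=> n F v; apply: approxD => //; [apply: h2 | apply: h4].
  - move=> a x [h1 h2]; split; first exact: subZ.
    by move=> n F v; apply: approxZ => //; apply: h2.
have closure : forall (w : nat -> N) y, (forall m, T (w m)) -> T1 y ->
    (forall m, in_piT pi T1 m (y - w m)) -> T y.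
  move=> w y Tw T1y hy; split => // n F v.
  have [z [t [hz ht ew]]] := (Tw n).2 n F v.
  have [t' [ht' ey]] := hy n.
  exists z, (t + t'); split => //; first exact: subD.
  by rewrite scalerDr addrA -ew -ey addrC subrK.
exists T; split => //.
- split; first by apply: (Hsub _ T1) => //.
  exists T1; split => // n; have [F [FT HF]] := HF0 n.
  have v : valid n F.
    split; first by move=> f /FT /ST01.
    by move=> s /HF /cmpP; apply: approx_mono.
  by exists F; split => //; [move=> f /FT /ST01 | move=> x [_ /(_ n F v)] /cmpP].
- split.
  + move=> x /TT1 Tx hx; apply: Hhaus => // n; exact: in_piT_mono (hx n).
  + move=> u Tu Cu.
    have [x T1x hx] := Hcau u (fun k => TT1 _ (Tu k))
                        (fun k => in_piT_mono TT1 (Cu k)).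
    have Tx : T x by apply: (closure u).
    exists x => // k.
    have [tt htt] : exists tt : nat -> N, forall j, T (tt j) /\ u j.+1 - u j = pi ^+ j *: tt j.
      exists (fun j => proj1_sig (constructive_indefinite_description _ (Cu j))).
      by move=> j; case: (constructive_indefinite_description _ (Cu j)).
    pose w m := \sum_(j < m) pi ^+ j *: tt (k + j)%N.
    have Tw : forall m, T (w m).
      elim=> [|m IH]; first by rewrite /w big_ord0; exact: sub0.
      by rewrite /w big_ord_recr /=; apply: subD => //; apply: subZ; case: (htt (k + m)%N).
    have ew : forall m, pi ^+ k *: w m = u (k + m)%N - u k.
      elim=> [|m IH]; first by rewrite /w big_ord0 scaler0 addn0 subrr.
      rewrite /w big_ord_recr /= scalerDr -/(w m) IH scalerA -exprD addnS.
      by case: (htt (k + m)%N) => _ <-; rewrite addrC addrA subrK.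
    have [y T1y hy] : exists2 y, T1 y & forall m, in_piT pi T1 m (y - w m).
      apply: Hcau; first by move=> m; apply: TT1.
      move=> m; exists (tt (k + m)%N); split; first by apply: TT1; case: (htt (k + m)%N).
      by rewrite /w big_ord_recr /= addrC addrK.
    have Ty : T y by apply: (closure w).
    exists y; split => //.
    apply/eqP; rewrite eq_sym -subr_eq0; apply/eqP; apply: Hhaus.
    * apply: subB => //; first exact: subZ.
      by apply: subB => //; apply: TT1.
    * move=> m; have [a [ha ea]] := hy m.
      have [b [hb eb]] := hx (k + m)%N.
      exists (pi ^+ k *: a - pi ^+ k *: b); split.
        by apply: subB => //; apply: subZ.
      rewrite (grp _ _ _ (u (k + m)%N)) -ew -scalerBr ea eb.
      by rewrite !scalerBr !scalerA -!exprD [(m + k)%N]addnC.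
- by move=> s Ss; split; [apply: ST01; apply: ST0 | move=> n F [_ h]; apply: h].
Qed.

End Main.

Section Lin.
Variables (V : idomainType) (pi : V) (M N : lmodType V) (f : M -> N).
Hypothesis Hf : is_linear f.

Lemma lin0 : f 0 = 0.
Proof.
have h := Hf 1 0 0; rewrite !scale1r addr0 in h.
by apply: (@addrI _ (f 0)); rewrite addr0 -h.
Qed.
Lemma linD x y : f (x + y) = f x + f y.
Proof. by have := Hf 1 x y; rewrite !scale1r. Qed.
Lemma linZ a x : f (a *: x) = a *: f x.
Proof. by have := Hf a x 0; rewrite !addr0 lin0 addr0. Qed.

Lemma image_compactoid (BM : (M -> Prop) -> Prop) (BN : (N -> Prop) -> Prop) S :
  compactoid pi BM S ->
  (forall S, BM S -> BN (fun y => exists2 x, S x & y = f x)) ->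
  compactoid pi BN (fun y => exists2 x, S x & y = f x).
Proof.
move=> [T [HT BT ST HF]] Hb.
exists (fun y => exists2 x, T x & y = f x); split.
- split.
  + by exists 0; [exact: sub0 | rewrite lin0].
  + by move=> _ _ [x Tx ->] [y Ty ->]; exists (x + y); [exact: subD | rewrite linD].
  + by move=> a _ [x Tx ->]; exists (a *: x); [exact: subZ | rewrite linZ].
- exact: Hb.
- by move=> _ [x /ST Tx ->]; exists x.
move=> n; have [F [FT HFx]] := HF n.
exists (map f F); split.
- by move=> _ /mapP [x /FT Tx ->]; exists x.
move=> _ [x /HFx [c [t [Tt ->]]] ->].
exists c, (f t); split; first by exists t.
rewrite linD linZ size_map; congr (_ + _).
rewrite (big_morph f linD lin0); apply: eq_bigr => k _.
by rewrite linZ (nth_map 0) // lin0.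
Qed.
End Lin.

Theorem lemma4p4 (V : idomainType) (pi : V) :
  is_complete_dvr pi ->
  forall (M : lmodType V) (BM : (M -> Prop) -> Prop),
    nuclear pi BM ->
    forall (N : lmodType V) (BN : (N -> Prop) -> Prop) (i : M -> N),
      is_completion pi BM BN i ->
      nuclear pi BN.
Proof.
move=> _ M BM [HbM HnM] N BN i [HcN [Hlin HiB] HU].
have HcN' := HcN.
case: HcN' => [[[Hfin Hun Hsub] Hmod] Hcomp].
have HPc : is_complete_born pi (BP pi BN).
  split; last exact: complete_hull.
  split.
    split.
    - move=> S s Ss; split; first exact: (Hfin _ s).
      exact: (compactoid_sub (compactoid_fin pi HcN.1 s)).
    - move=> S1 S2 [B1 C1] [B2 C2]; split; first exact: Hun.
      exact: compactoid_union.
    - move=> S1 S2 s [B2 C2]; split; first exact: (Hsub _ S2).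
      exact: (compactoid_sub C2).
  move=> S BS; have [T [HT BT _ ST]] := complete_hull HcN BS.
  by exists T.
have HiP : is_bounded_map BM (BP pi BN) i.
  split => // S BS; split; first exact: HiB.
  by apply: (image_compactoid Hlin (HnM S BS)) => S0 B0; apply: HiB.
have [h [[hlin hB] hi _]] := HU N (BP pi BN) i HPc HiP.
have [h0 [_ _ Huniq]] := HU N BN i HcN (conj Hlin HiB).
have hh : forall y, h y = h0 y.
  apply: Huniq => //; split => // S BS; exact: (hB S BS).1.
have hid : forall y, y = h0 y.
  apply: (Huniq id) => //; split => // S BS.
  by apply: (Hsub _ S) => // _ [x Sx ->].
split; first exact: HcN.1.
move=> S BS; apply: (compactoid_sub (hB S BS).2).
by move=> y Sy; exists y => //; rewrite hh -hid.
Qed.
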